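(* Let $k$ be a field, $A$ and $B$ $k$-algebras, and $f: A \to M_n(B)$ a homomorphism of $k$-algebras. Consider the free product $B \ast_k k\langle (v_{ij})_{i,j=1}^n\rangle$ and the $n \times n$ matrix $V = (v_{ij})_{i,j=1}^n$ over it. Let $I_f$ be the two-sided ideal of $B \ast_k k\langle (v_{ij})_{i,j=1}^n\rangle$ generated by all entries of the matrices $V f(a) - f(a) V$ for $a \in A$. Then $f$ is a ring epimorphism if and only if $I_f$ contains $v_{ii} - v_{jj}$ for all $i,j \in \{1,\dots,n\}$, $v_{i'j'}$ for all $i' \neq j'$ in $\{1,\dots,n\}$, and $b v_{ii} - v_{ii} b$ for all $i \in \{1,\dots,n\}$ and $b \in B$.
   Context: A ring homomorphism $\varphi: R \to S$ is a ring epimorphism if for any two ring homomorphisms $\varrho_1, \varrho_2: S \to T$ with $\varrho_1\varphi = \varrho_2\varphi$ one has $\varrho_1 = \varrho_2$. $k\langle (v_{ij})\rangle$ denotes the free associative $k$-algebra on the $n^2$ indeterminates $v_{ij}$, and $\ast_k$ denotes the free product (coproduct) of $k$-algebras. *)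

(* Defs.v *)
From HB Require Import structures.
From mathcomp Require Import all_boot all_order all_algebra.
Set Implicit Arguments. Unset Strict Implicit. Unset Printing Implicit Defensive.
Import GRing.Theory.
Local Open Scope ring_scope.

Definition ring_epi (R S : pzRingType) (phi : R -> S) : Prop :=
  forall (T : pzRingType) (r1 r2 : {rmorphism S -> T}),
    (forall x, r1 (phi x) = r2 (phi x)) -> forall y, r1 y = r2 y.

Inductive in_ideal (R : pzRingType) (G : R -> Prop) : R -> Prop :=
| ideal_gen x : G x -> in_ideal G x
| ideal_0 : in_ideal G 0
| ideal_add x y : in_ideal G x -> in_ideal G y -> in_ideal G (x + y)
| ideal_mul r x s : in_ideal G x -> in_ideal G (r * x * s).

(* (P, iota, V) is the free product B *_k k<(v_ij)>, with V = (v_ij):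
   the coproduct of B and the free algebra on n^2 generators in the
   category of k-algebras.  A k-algebra map k<(v_ij)> -> T is the same as
   a matrix W in M_n(T) (v_ij |-> W i j). *)
Definition is_free_product (k : fieldType) (B P : algType k)
  (iota : {lrmorphism B -> P}) (n : nat) (V : 'M[P]_n) : Prop :=
  forall (T : algType k) (g : {lrmorphism B -> T}) (W : 'M[T]_n),
    (exists h : {lrmorphism P -> T},
        (forall b, h (iota b) = g b) /\ map_mx h V = W) /\
    (forall h1 h2 : {lrmorphism P -> T},
        (forall b, h1 (iota b) = h2 (iota b)) ->
        map_mx h1 V = map_mx h2 V -> forall p, h1 p = h2 p).

(* Main.v *)
Require Import Defs.
From HB Require Import structures.
From mathcomp Require Import all_boot all_order all_algebra.
From mathcomp Require Import ring_quotient generic_quotient.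
From mathcomp Require Import boolp.
Set Implicit Arguments. Unset Strict Implicit. Unset Printing Implicit Defensive.
Import GRing.Theory.
Import ring_quotient.Quotient.
Local Open Scope ring_scope.
Local Open Scope quotient_scope.

Section QuotRing.
Variables (R : pzRingType) (G : R -> Prop).

Definition Ib : {pred R} := fun x => `[< in_ideal G x >].

Lemma IbP x : reflect (in_ideal G x) (x \in Ib).
Proof. exact: asboolP. Qed.

Lemma Ib_zmod : zmod_closed Ib.
Proof.
split; first by apply/IbP; exact: ideal_0.
move=> x y /IbP hx /IbP hy; apply/IbP.
apply: ideal_add => //.
rewrite -[- y](mulr1) -mulN1r.
exact: ideal_mul.
Qed.

HB.instance Definition _ := GRing.isZmodClosed.Build R Ib Ib_zmod.

Lemma IbM r x s : x \in Ib -> r * x * s \in Ib.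
Proof. by move=> /IbP h; apply/IbP; exact: ideal_mul. Qed.

Definition QT := Quotient.quot Ib.
HB.instance Definition _ := GRing.Zmodule.on QT.
HB.instance Definition _ := EqQuotient.on QT.

Definition qone : QT := lift_cst QT 1.
Definition qmul := lift_op2 QT *%R.
Canonical pi_qone_morph := PiConst qone.

Lemma pi_qmul: {morph \pi_QT : x y / x * y >-> qmul x y}.
Proof.
move=> x y; unlock qmul; apply/eqP; rewrite piE equivE.
rewrite -[_ * _](addrNK (x * repr (\pi_QT y))) -mulrBr.
rewrite -addrA -mulrBl rpredD //.
  by rewrite -[_ * _]mulr1; apply/IbP; apply: ideal_mul; apply/IbP; rewrite idealrDE opprK reprK.
by rewrite -[_ * _]mul1r mulrA; apply/IbP; apply: ideal_mul; apply/IbP; rewrite idealrDE opprK reprK.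
Qed.
Canonical pi_qmul_morph := PiMorph2 pi_qmul.

Lemma qmulA: associative qmul.
Proof. by move=> x y z; rewrite -[x]reprK -[y]reprK -[z]reprK !piE mulrA. Qed.
Lemma qmul1: left_id qone qmul.
Proof. by move=> x; rewrite -[x]reprK !piE mul1r. Qed.
Lemma qmulr1: right_id qone qmul.
Proof. by move=> x; rewrite -[x]reprK !piE mulr1. Qed.
Lemma qmulDl: left_distributive qmul +%R.
Proof.
move=> x y z; rewrite -[x]reprK -[y]reprK -[z]reprK.
by apply/eqP; rewrite piE /= mulrDl equiv_refl.
Qed.
Lemma qmulDr: right_distributive qmul +%R.
Proof.
move=> x y z; rewrite -[x]reprK -[y]reprK -[z]reprK.
by apply/eqP; rewrite piE /= mulrDr equiv_refl.
Qed.

HB.instance Definition _ := GRing.Zmodule_isPzRing.Build QT qmulA qmul1 qmulr1 qmulDl qmulDr.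

Definition piQ (x : R) : QT := \pi_QT x.

Lemma piQ_is_zmod : zmod_morphism piQ.
Proof. by move=> x y; rewrite /piQ !piE. Qed.
Lemma piQ_is_monoid : monoid_morphism piQ.
Proof. split. rewrite /piQ. change (\pi_QT 1 = qone). by rewrite piE. by move=> x y; rewrite /piQ pi_qmul. Qed.
HB.instance Definition _ := GRing.isZmodMorphism.Build R QT piQ piQ_is_zmod.
HB.instance Definition _ := GRing.isMonoidMorphism.Build R QT piQ piQ_is_monoid.

Lemma piQ0 x : piQ x = 0 -> in_ideal G x.
Proof.
move=> h; apply/IbP; have: piQ x == piQ 0 by rewrite h rmorph0.
by rewrite /piQ piE equivE subr0.
Qed.

Lemma piQ_gen x : G x -> piQ x = 0.
Proof.
move=> gx; apply/eqP; rewrite -(rmorph0 piQ) /piQ piE equivE subr0.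
by apply/IbP; exact: ideal_gen.
Qed.
End QuotRing.
Section Forward.
Variables (A0 : pzRingType) (B0 Q : pzRingType) (m : nat).
Variables (f : A0 -> 'M[B0]_m) (io : {rmorphism B0 -> Q}) (U : 'M[Q]_m).
Hypothesis fepi : ring_epi f.
Hypothesis hU : forall a, map_mx io (f a) *m U = U *m map_mx io (f a).

Definition th1 (x : 'M[B0]_m) : 'M[Q]_(m + m) :=
  block_mx (map_mx io x) 0 0 (map_mx io x).
Definition th2 (x : 'M[B0]_m) : 'M[Q]_(m + m) :=
  block_mx (map_mx io x) (map_mx io x *m U - U *m map_mx io x) 0 (map_mx io x).

Lemma th1_zmod : zmod_morphism th1.
Proof. by move=> x y; rewrite /th1 map_mxB opp_block_mx add_block_mx !oppr0 !addr0. Qed.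
Lemma th2_zmod : zmod_morphism th2.
Proof.
move=> x y; rewrite /th2 map_mxB opp_block_mx add_block_mx !oppr0 !addr0.
congr block_mx. by rewrite mulmxBl mulmxBr !opprB !addrA [in LHS]addrAC [X in X + _ = _]addrAC [in RHS]addrAC.
Qed.
Lemma th1_monoid : monoid_morphism th1.
Proof.
split; first by rewrite /th1 map_mx1 -scalar_mx_block.
move=> x y; rewrite /th1 -!mulmxE mulmx_block map_mxM.
by rewrite !mulmx0 !mul0mx !addr0 !add0r.
Qed.
Lemma th2_monoid : monoid_morphism th2.
Proof.
split; first by rewrite /th2 map_mx1 mul1mx mulmx1 subrr -scalar_mx_block.
move=> x y; rewrite /th2 -!mulmxE mulmx_block map_mxM.
rewrite !mulmx0 !mul0mx !addr0 !add0r; congr block_mx.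
rewrite !mulmxBr !mulmxBl !mulmxA addrA; congr (_ + _).
by rewrite addrNK.
Qed.
HB.instance Definition _ := GRing.isZmodMorphism.Build _ _ th1 th1_zmod.
HB.instance Definition _ := GRing.isMonoidMorphism.Build _ _ th1 th1_monoid.
HB.instance Definition _ := GRing.isZmodMorphism.Build _ _ th2 th2_zmod.
HB.instance Definition _ := GRing.isMonoidMorphism.Build _ _ th2 th2_monoid.

Lemma forward_comm x : map_mx io x *m U = U *m map_mx io x.
Proof.
have e : forall a, th1 (f a) = th2 (f a) by move=> a; rewrite /th1 /th2 hU subrr.
have := @fepi _ th1 th2 e x; rewrite /th1 /th2 => /eq_block_mx[_ h _ _].
by apply/eqP; rewrite -subr_eq0 -h.
Qed.
End Forward.
Lemma mulmx_deltaE (R : pzRingType) m n p (A : 'M[R]_(m, n)) (i : 'I_n) (j : 'I_p) k l :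
  (A *m delta_mx i j) k l = if l == j then A k i else 0.
Proof.
rewrite mxE (bigD1 i) //= big1 => [|t /negbTE ti]; last by rewrite mxE ti mulr0.
by rewrite mxE eqxx /=; case: eqP => _; rewrite ?mulr1 ?mulr0 addr0.
Qed.

Lemma delta_mulmxE (R : pzRingType) m n p (A : 'M[R]_(n, p)) (i : 'I_m) (j : 'I_n) k l :
  (delta_mx i j *m A) k l = if k == i then A j l else 0.
Proof.
rewrite mxE (bigD1 j) //= big1 => [|t /negbTE tj]; last by rewrite mxE tj andbF mul0r.
by rewrite mxE eqxx andbT; case: eqP => _; rewrite ?mul1r ?mul0r addr0.
Qed.

Lemma mulmx_scalarE (R : pzRingType) m n (A : 'M[R]_(m, n)) a k l :
  (A *m a%:M) k l = A k l * a.
Proof.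
rewrite mxE (bigD1 l) //= big1 => [|t /negbTE tl]; last by rewrite mxE tl mulr0n mulr0.
by rewrite mxE eqxx mulr1n addr0.
Qed.

Lemma scalar_mulmxE (R : pzRingType) m n (A : 'M[R]_(m, n)) a k l :
  (a%:M *m A) k l = a * A k l.
Proof.
rewrite mxE (bigD1 k) //= big1 => [|t /negbTE tk]; last by rewrite mxE eq_sym tk mulr0n mul0r.
by rewrite mxE eqxx mulr1n addr0.
Qed.

Lemma forward_dir (k : fieldType) (A B : algType k) (n : nat)
  (f : {rmorphism A -> 'M[B]_n.+1})
  (P : algType k) (iota : {lrmorphism B -> P}) (V : 'M[P]_n.+1) :
  let If := in_ideal (fun p : P => exists (a : A) (i j : 'I_n.+1),
              p = (V *m map_mx iota (f a) - map_mx iota (f a) *m V) i j) in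
  ring_epi f ->
  [/\ forall i j : 'I_n.+1, If (V i i - V j j),
      forall i j : 'I_n.+1, i != j -> If (V i j) &
      forall (i : 'I_n.+1) (b : B), If (iota b * V i i - V i i * iota b)].
Proof.
move=> If fepi.
pose G := (fun p : P => exists (a : A) (i j : 'I_n.+1), p = (V *m map_mx iota (f a) - map_mx iota (f a) *m V) i j).
have hU : forall a, map_mx (piQ G \o iota) (f a) *m (map_mx (piQ G) V) = (map_mx (piQ G) V) *m map_mx (piQ G \o iota) (f a).
  move=> a; apply/matrixP => i j.
  have e : map_mx (piQ G) (V *m map_mx iota (f a) - map_mx iota (f a) *m V)
     = (map_mx (piQ G) V) *m map_mx (piQ G \o iota) (f a) - map_mx (piQ G \o iota) (f a) *m (map_mx (piQ G) V).
    by rewrite map_mxB !map_mxM -map_mx_comp.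
  have := congr1 (fun M : 'M[QT G]_n.+1 => M i j) e; rewrite /= mxE piQ_gen; last by exists a, i, j.
  by rewrite mxE [X in _ + X]mxE => /esym/eqP; rewrite subr_eq0 eq_sym => /eqP.
have fc := forward_comm fepi hU.
split.
- move=> i j; apply: piQ0; rewrite rmorphB; apply/eqP; rewrite subr_eq0; apply/eqP.
  have := congr1 (fun M : 'M[QT G]_n.+1 => M i j) (fc (delta_mx i j)).
  rewrite map_delta_mx mulmx_deltaE delta_mulmxE !eqxx !mxE.
  by move/esym.
- move=> i j ij; apply: piQ0.
  have := congr1 (fun M : 'M[QT G]_n.+1 => M i j) (fc (delta_mx i i)).
  rewrite map_delta_mx mulmx_deltaE delta_mulmxE eqxx eq_sym (negbTE ij) !mxE.
  by [].
- move=> i b; apply: piQ0; rewrite rmorphB !rmorphM; apply/eqP; rewrite subr_eq0; apply/eqP.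
  have := congr1 (fun M : 'M[QT G]_n.+1 => M i i) (fc b%:M).
  by rewrite map_scalar_mx mulmx_scalarE scalar_mulmxE !mxE.
Qed.

Section Back.
Variables (k : fieldType) (B : algType k) (n : nat) (T : pzRingType).
Variables (r1 r2 : {rmorphism 'M[B]_n.+1 -> T}).

Definition phiB (c : k) : 'M[B]_n.+1 := (c *: (1 : B))%:M.
Hypothesis hk : forall c, r1 (phiB c) = r2 (phiB c).
Hypothesis T1 : (1 : T) != 0.

Lemma phiB_comm c x : phiB c * x = x * phiB c.
Proof.
rewrite -!mulmxE; apply/matrixP => i j.
by rewrite mulmx_scalarE scalar_mulmxE -scalerAl -scalerAr mul1r mulr1.
Qed.

Lemma phiB1 : phiB 1 = 1.
Proof. by rewrite /phiB scale1r. Qed.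
Lemma phiBM a b : phiB (a * b) = phiB a * phiB b.
Proof. by rewrite /phiB -mulmxE -scalar_mxM -scalerAl mul1r scalerA. Qed.
Lemma phiBD a b : phiB (a + b) = phiB a + phiB b.
Proof. by rewrite /phiB scalerDl raddfD. Qed.

Definition phi c : T := r1 (phiB c).

Lemma phi_comm1 c x : phi c * r1 x = r1 x * phi c.
Proof. by rewrite /phi -!rmorphM phiB_comm. Qed.
Lemma phi_comm2 c x : phi c * r2 x = r2 x * phi c.
Proof. by rewrite /phi hk -!rmorphM phiB_comm. Qed.

Definition cent (t : T) := forall c, phi c * t = t * phi c.

Definition cpred : {pred 'M[T]_(1 + 1)} :=
  fun M => `[< forall c, (phi c)%:M * M = M * (phi c)%:M >].

Lemma cpredP M : reflect (forall c, (phi c)%:M * M = M * (phi c)%:M) (M \in cpred).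
Proof. exact: asboolP. Qed.

Lemma cpred_subring : subring_closed cpred.
Proof.
split.
- by apply/cpredP => c; rewrite mulr1 mul1r.
- move=> x y /cpredP hx /cpredP hy; apply/cpredP => c.
  by rewrite mulrBr mulrBl hx hy.
- move=> x y /cpredP hx /cpredP hy; apply/cpredP => c.
  by rewrite mulrA hx -mulrA hy mulrA.
Qed.

Definition TT := {M : 'M[T]_(1 + 1) | M \in cpred}.
HB.instance Definition _ := [isSub for (@sval _ (fun M => M \in cpred) : TT -> _)].
HB.instance Definition _ := [Choice of TT by <:].
HB.instance Definition _ := GRing.SubChoice_isSubPzRing.Build _ _ TT cpred_subring.

Lemma TT1 : (1 : TT) != 0.
Proof.
apply/eqP => /(congr1 val) /= /matrixP /(_ 0 0).
by rewrite !mxE /= mulr1n; apply/eqP.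
Qed.
HB.instance Definition _ := GRing.PzSemiRing_isNonZero.Build TT TT1.

Definition blk (a b d : T) : 'M[T]_(1 + 1) := block_mx a%:M b%:M 0 d%:M.

Lemma blkM a b d a' b' d' : blk a b d * blk a' b' d' = blk (a * a') (a * b' + b * d') (d * d').
Proof.
rewrite /blk -mulmxE mulmx_block !mulmx0 !mul0mx !addr0 add0r.
by rewrite -!scalar_mxM raddfD.
Qed.

Lemma blkD a b d a' b' d' : blk a b d + blk a' b' d' = blk (a + a') (b + b') (d + d').
Proof. by rewrite /blk add_block_mx !raddfD addr0. Qed.

Lemma blkN a b d : - blk a b d = blk (- a) (- b) (- d).
Proof. by rewrite /blk opp_block_mx !raddfN oppr0. Qed.

Lemma blkB a b d a' b' d' : blk a b d - blk a' b' d' = blk (a - a') (b - b') (d - d').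
Proof. by rewrite blkN blkD. Qed.

Lemma blk1 : blk 1 0 1 = 1.
Proof. by rewrite /blk raddf0 -scalar_mx_block. Qed.

Lemma blk_scal t : t%:M = blk t 0 t.
Proof. by rewrite /blk raddf0 -scalar_mx_block. Qed.

Lemma blk_inj a b d a' b' d' : blk a b d = blk a' b' d' -> [/\ a = a', b = b' & d = d'].
Proof.
rewrite /blk => /eq_block_mx [h1 h2 _ h3].
have sc : forall x y : T, x%:M = y%:M :> 'M_1 -> x = y.
  by move=> x y /matrixP /(_ 0 0); rewrite !mxE /= !mulr1n.
by split; apply: sc.
Qed.

Lemma blk_in a b d : cent a -> cent b -> cent d -> blk a b d \in cpred.
Proof.
move=> ha hb hd; apply/cpredP => c.
by rewrite blk_scal !blkM !mulr0 !mul0r !addr0 add0r ha hb hd.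
Qed.

Lemma cent_phi c : cent (phi c).
Proof. by move=> c'; rewrite /phi phi_comm1. Qed.
Lemma cent0 : cent 0.
Proof. by move=> c; rewrite mulr0 mul0r. Qed.
Lemma cent_r1 x : cent (r1 x).
Proof. by move=> c; rewrite phi_comm1. Qed.
Lemma cent_r2 x : cent (r2 x).
Proof. by move=> c; rewrite phi_comm2. Qed.
Lemma centM a b : cent a -> cent b -> cent (a * b).
Proof. by move=> ha hb c; rewrite mulrA ha -mulrA hb mulrA. Qed.

Definition phiT c : TT := Sub (blk (phi c) 0 (phi c)) (blk_in (cent_phi c) cent0 (cent_phi c)).

Lemma phiT_val c : val (phiT c) = blk (phi c) 0 (phi c).
Proof. by []. Qed.

Lemma phiM a b : phi (a * b) = phi a * phi b.
Proof. by rewrite /phi phiBM rmorphM. Qed.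
Lemma phiD a b : phi (a + b) = phi a + phi b.
Proof. by rewrite /phi phiBD rmorphD. Qed.
Lemma phi1 : phi 1 = 1.
Proof. by rewrite /phi phiB1 rmorph1. Qed.

Lemma phiTM a b : phiT (a * b) = phiT a * phiT b.
Proof. by apply: val_inj; rewrite rmorphM /= blkM phiM mulr0 mul0r addr0. Qed.
Lemma phiTD a b : phiT (a + b) = phiT a + phiT b.
Proof. by apply: val_inj; rewrite rmorphD /= ?phiT_val blkD phiD addr0. Qed.
Lemma phiT1 : phiT 1 = 1.
Proof. by apply: val_inj; rewrite rmorph1 /= ?phiT_val phi1 blk1. Qed.

Lemma phiT_comm c (x : TT) : phiT c * x = x * phiT c.
Proof. by apply: val_inj; rewrite !rmorphM /= -blk_scal (cpredP _ (valP x)). Qed.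

Definition scT (c : k) (x : TT) : TT := phiT c * x.

Lemma scTA a b v : scT a (scT b v) = scT (a * b) v.
Proof. by rewrite /scT mulrA phiTM. Qed.
Lemma scT1 : left_id 1 scT.
Proof. by move=> x; rewrite /scT phiT1 mul1r. Qed.
Lemma scTDr : right_distributive scT +%R.
Proof. by move=> c x y; rewrite /scT mulrDr. Qed.
Lemma scTDl v : {morph scT^~ v: a b / a + b}.
Proof. by move=> a b; rewrite /scT phiTD mulrDl. Qed.

HB.instance Definition _ := GRing.Zmodule_isLmodule.Build k TT scTA scT1 scTDr scTDl.

Lemma scTAl (a : k) (u v : TT) : a *: (u * v) = (a *: u) * v.
Proof. by rewrite /GRing.scale /= /scT mulrA. Qed.
HB.instance Definition _ := GRing.Lmodule_isLalgebra.Build k TT scTAl.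
Lemma scTAr (a : k) (u v : TT) : a *: (u * v) = u * (a *: v).
Proof. by rewrite /GRing.scale /= /scT mulrA phiT_comm mulrA. Qed.
HB.instance Definition _ := GRing.Lalgebra_isAlgebra.Build k TT scTAr.


Definition gT (b : B) : TT :=
  Sub (blk (r1 b%:M) 0 (r2 b%:M)) (blk_in (cent_r1 _) cent0 (cent_r2 _)).

Lemma gT_val b : val (gT b) = blk (r1 b%:M) 0 (r2 b%:M).
Proof. by []. Qed.

Lemma gT_zmod : zmod_morphism gT.
Proof. by move=> x y; apply: val_inj; rewrite rmorphB /= raddfB !rmorphB blkB subr0. Qed.

Lemma gT_monoid : monoid_morphism gT.
Proof.
split.
  by apply: val_inj; rewrite rmorph1 /= !rmorph1 blk1.
move=> x y; apply: val_inj; rewrite rmorphM /= blkM mulr0 mul0r addr0.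
by rewrite scalar_mxM mulmxE !rmorphM.
Qed.

Lemma gT_scal : scalable_for *:%R gT.
Proof.
move=> c b; apply: val_inj.
change (val (gT (c *: b)) = val (phiT c * gT b)); rewrite rmorphM /= blkM mulr0 mul0r addr0.
have -> : (c *: b)%:M = phiB c * b%:M.
  by rewrite /phiB -mulmxE -scalar_mxM -scalerAl mul1r.
by rewrite !rmorphM -hk.
Qed.

HB.instance Definition _ := GRing.isZmodMorphism.Build B TT gT gT_zmod.
HB.instance Definition _ := GRing.isMonoidMorphism.Build B TT gT gT_monoid.
HB.instance Definition _ := GRing.isScalable.Build k B TT *:%R gT gT_scal.


Lemma sum_up (I : finType) (F : I -> T) : \sum_i blk 0 (F i) 0 = blk 0 (\sum_i F i) 0.
Proof.
apply: (big_rec2 (fun x y => x = blk 0 y 0)).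
  by rewrite /blk !raddf0 block_mx0.
by move=> i x y _ ->; rewrite blkD !addr0.
Qed.

Lemma I1 (F : 'M[B]_n.+1) j : F * delta_mx j 0 = \sum_l delta_mx l 0 * (F l j)%:M.
Proof.
rewrite -[F * _]/(mulmx _ _); apply/matrixP => a b; rewrite mulmx_deltaE summxE.
rewrite (bigD1 a) //= big1 => [|l /negbTE la].
  by rewrite -[_ * _]/(mulmx _ _) mulmx_scalarE mxE eqxx /=; case: eqP; rewrite ?mul1r ?mul0r addr0.
by rewrite -[_ * _]/(mulmx _ _) mulmx_scalarE mxE eq_sym la mul0r.
Qed.

Lemma I2 (F : 'M[B]_n.+1) i : delta_mx 0 i * F = \sum_l (F i l)%:M * delta_mx 0 l.
Proof.
rewrite -[_ * F]/(mulmx _ _); apply/matrixP => a b; rewrite delta_mulmxE summxE.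
rewrite (bigD1 b) //= big1 => [|l /negbTE lb].
  by rewrite -[_ * _]/(mulmx _ _) scalar_mulmxE mxE eqxx andbT; case: eqP; rewrite ?mulr1 ?mulr0 addr0.
by rewrite -[_ * _]/(mulmx _ _) scalar_mulmxE mxE (eq_sym b) lb andbF mulr0.
Qed.

Definition e1 i j := r1 (delta_mx i j).
Definition e2 i j := r2 (delta_mx i j).
Definition mm (i j : 'I_n.+1) := e1 0 i * e2 j 0.
Lemma cent_mm i j : cent (mm i j).
Proof. exact: centM (cent_r1 _) (cent_r2 _). Qed.

Definition upT (i j : 'I_n.+1) : TT := Sub (blk 0 (mm i j) 0) (blk_in cent0 (cent_mm i j) cent0).
Definition W : 'M[TT]_n.+1 := \matrix_(i, j) upT i j.

Lemma T_ident (F : 'M[B]_n.+1) i j : r1 F = r2 F ->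
  \sum_l mm i l * r2 (F l j)%:M = \sum_l r1 (F i l)%:M * mm l j.
Proof.
move=> hF.
have -> : \sum_l mm i l * r2 (F l j)%:M = e1 0 i * r2 F * e2 j 0.
  rewrite /mm /e1 /e2 -mulrA -rmorphM I1 rmorph_sum mulr_sumr.
  by apply: eq_bigr => l _; rewrite rmorphM !mulrA.
have -> : \sum_l r1 (F i l)%:M * mm l j = e1 0 i * r1 F * e2 j 0.
  rewrite /mm /e1 /e2 -rmorphM I2 rmorph_sum mulr_suml.
  by apply: eq_bigr => l _; rewrite rmorphM !mulrA.
by rewrite hF.
Qed.

Lemma W_comm (F : 'M[B]_n.+1) : r1 F = r2 F ->
  W *m map_mx gT F = map_mx gT F *m W.
Proof.
move=> hF; apply/matrixP => i j; apply: val_inj; rewrite !mxE !rmorph_sum /=.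
transitivity (\sum_l blk 0 (mm i l * r2 (F l j)%:M) 0).
  apply: eq_bigr => l _; rewrite !mxE /= blkM.
  by rewrite ?mul0r ?mulr0 ?addr0 ?add0r.
transitivity (\sum_l blk 0 (r1 (F i l)%:M * mm l j) 0); last first.
  apply: eq_bigr => l _; rewrite !mxE /= blkM.
  by rewrite ?mul0r ?mulr0 ?addr0 ?add0r.
by rewrite !sum_up T_ident.
Qed.
Lemma scal_delta_comm (b : B) (i j : 'I_n.+1) : b%:M * delta_mx i j = delta_mx i j * b%:M.
Proof.
rewrite -[_ * delta_mx i j]/(mulmx _ _) -[delta_mx i j * _]/(mulmx _ _).
apply/matrixP => a c; rewrite scalar_mulmxE mulmx_scalarE mxE.
by case: (_ && _); rewrite ?mulr1 ?mul1r ?mulr0 ?mul0r.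
Qed.

Lemma delta_mulC (i j l m : 'I_n.+1) :
  delta_mx i j * delta_mx l m = if j == l then delta_mx i m else 0 :> 'M[B]_n.+1.
Proof.
rewrite -[_ * _]/(mulmx _ _) mul_delta_mx_cond.
by case: eqP; rewrite ?mulr1n ?mulr0n.
Qed.

Lemma e1M i j l m : e1 i j * e1 l m = if j == l then e1 i m else 0.
Proof. by rewrite /e1 -rmorphM delta_mulC; case: eqP; rewrite ?rmorph0. Qed.
Lemma e2M i j l m : e2 i j * e2 l m = if j == l then e2 i m else 0.
Proof. by rewrite /e2 -rmorphM delta_mulC; case: eqP; rewrite ?rmorph0. Qed.

Section Final.
Hypothesis hd : forall i j, mm i i = mm j j.
Hypothesis ho : forall i j, i != j -> mm i j = 0.
Hypothesis hb : forall i b, r1 b%:M * mm i i = mm i i * r2 b%:M.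

Lemma Xone : \sum_l e1 l 0 * mm 0 0 * e2 0 l = 1.
Proof.
have -> : (1 : T) = r1 1 * r2 1 by rewrite !rmorph1 mulr1.
rewrite -[1 : 'M[B]_n.+1]/(1%:M) mx1_sum_delta !rmorph_sum mulr_suml.
apply: eq_bigr => i _; rewrite mulr_sumr (bigD1 i) //= big1 => [|j /negbTE ji].
  rewrite addr0 -(hd i 0) /mm.
  have -> : r1 (delta_mx i i) = e1 i 0 * e1 0 i by rewrite e1M eqxx.
  have -> : r2 (delta_mx i i) = e2 i 0 * e2 0 i by rewrite e2M eqxx.
  by rewrite !mulrA.
have -> : r1 (delta_mx i i) = e1 i 0 * e1 0 i by rewrite e1M eqxx.
have -> : r2 (delta_mx j j) = e2 j 0 * e2 0 j by rewrite e2M eqxx.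
rewrite mulrA -[e1 i 0 * e1 0 i * e2 j 0]mulrA -/(mm i j) ho ?mul0r ?mulr0 //.
  by rewrite mul0r.
by rewrite eq_sym ji.
Qed.

Lemma r1x_e1 (b : B) i j l :
  r1 (b%:M * delta_mx i j) * e1 l 0 = if j == l then e1 i 0 * r1 b%:M else 0.
Proof.
rewrite /e1 -rmorphM -mulrA delta_mulC; case: eqP => _; last by rewrite mulr0 rmorph0.
by rewrite scal_delta_comm rmorphM.
Qed.

Lemma e2_r2x (b : B) i j l :
  e2 0 l * r2 (b%:M * delta_mx i j) = if l == i then e2 0 j * r2 b%:M else 0.
Proof.
rewrite /e2 scal_delta_comm -rmorphM mulrA delta_mulC; case: eqP => _; last by rewrite mul0r rmorph0.
by rewrite rmorphM.
Qed.

Lemma key (b : B) i j : r1 (b%:M * delta_mx i j) = r2 (b%:M * delta_mx i j).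
Proof.
transitivity (e1 i 0 * mm 0 0 * e2 0 j * r2 b%:M).
  rewrite -[LHS]mulr1 -Xone mulr_sumr (bigD1 j) //= big1 => [|l /negbTE jl].
    rewrite addr0 !mulrA r1x_e1 eqxx.
    have hb' := hb 0 b; rewrite /mm in hb'.
    rewrite -(mulrA (e1 i 0 * r1 b%:M)) -(mulrA (e1 i 0)) hb' -!mulrA.
    by rewrite /e2 -!rmorphM scal_delta_comm.
  by rewrite !mulrA r1x_e1 eq_sym jl !mul0r.
rewrite -[RHS]mul1r -Xone mulr_suml (bigD1 i) //= big1 => [|l /negbTE li].
  by rewrite addr0 -!mulrA e2_r2x eqxx.
by rewrite -!mulrA e2_r2x li !mulr0.
Qed.

Lemma final y : r1 y = r2 y.
Proof.
rewrite (matrix_sum_delta y) !rmorph_sum; apply: eq_bigr => i _.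
rewrite !rmorph_sum; apply: eq_bigr => j _.
by rewrite -mul_scalar_mx key.
Qed.
End Final.
End Back.

Lemma backward_dir (k : fieldType) (A B : algType k) (n : nat)
  (f : {rmorphism A -> 'M[B]_n.+1})
  (f_klin : forall (c : k) (a : A), f (c *: a) = map_mx ( *:%R c) (f a))
  (P : algType k) (iota : {lrmorphism B -> P}) (V : 'M[P]_n.+1)
  (hP : is_free_product iota V) :
  let If := in_ideal (fun p : P => exists (a : A) (i j : 'I_n.+1),
              p = (V *m map_mx iota (f a) - map_mx iota (f a) *m V) i j) in
  [/\ forall i j : 'I_n.+1, If (V i i - V j j),
      forall i j : 'I_n.+1, i != j -> If (V i j) &
      forall (i : 'I_n.+1) (b : B), If (iota b * V i i - V i i * iota b)] ->
  ring_epi f.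
Proof.
move=> If [hd ho hb] T r1 r2 agree y.
have [T0|T1] := eqVneq (1 : T) 0.
  by rewrite -[r1 y]mulr1 -[r2 y]mulr1 T0 !mulr0.
have hk : forall c, r1 (phiB B n c) = r2 (phiB B n c).
  move=> c; have -> : phiB B n c = f (c *: 1).
    rewrite f_klin rmorph1; apply/matrixP => i j; rewrite !mxE.
    by case: (i == j); rewrite ?mulr1n ?mulr0n ?scaler0.
  exact: agree.
have [[h [hi hV]] _] := hP _ (gT hk) (W hk).
have hent : forall i j, h (V i j) = W hk i j.
  by move=> i j; rewrite -hV mxE.
have kill : forall p, If p -> h p = 0.
  move=> p; elim => [x [a [i [j ->]]] | | x1 y1 _ e1 _ e2 | r x s _ e].
  - transitivity (map_mx h (V *m map_mx iota (f a) - map_mx iota (f a) *m V) i j); first by rewrite [RHS]mxE.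
    rewrite map_mxB !map_mxM hV -map_mx_comp.
    have -> : map_mx (h \o iota) (f a) = map_mx (gT hk) (f a).
      by apply: eq_map_mx => b /=; rewrite hi.
    by rewrite W_comm ?subrr ?mxE //; exact: agree.
  - exact: rmorph0.
  - by transitivity (h x1 + h y1); [exact: rmorphD | rewrite e1 e2 addr0].
  - by transitivity (h r * h x * h s); [rewrite !rmorphM | rewrite e mulr0 mul0r].
apply: (final (r1 := r1) (r2 := r2)).
- move=> i j; have e := kill _ (hd i j).
  have e' : W hk i i - W hk j j = 0 by rewrite -!hent -e rmorphB.
  move/eqP: e'; rewrite subr_eq0 => /eqP /(congr1 val); rewrite !mxE /=.
  by case/blk_inj.
- move=> i j ij; have e := kill _ (ho i j ij).
  have e' : W hk i j = 0 by rewrite -hent.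
  move/(congr1 val): e'; rewrite !mxE /=.
  have z : (0 : 'M[T]_(1 + 1)) = blk 0 0 0 by rewrite /blk raddf0 block_mx0.
  by rewrite [X in _ = X -> _]z => /blk_inj [_ -> _].
- move=> i b; have e := kill _ (hb i b).
  have e' : gT hk b * W hk i i - W hk i i * gT hk b = 0.
    by rewrite -hent -hi -e rmorphB !rmorphM.
  move/eqP: e'; rewrite subr_eq0 => /eqP /(congr1 val); rewrite !rmorphM !mxE /=.
  rewrite !blkM !mul0r !mulr0 !addr0 !add0r.
  by case/blk_inj.
Qed.

Close Scope quotient_scope.
Unset Implicit Arguments.

Theorem mainTheorem11 (k : fieldType) (A B : algType k) (n : nat)
  (f : {rmorphism A -> 'M[B]_n.+1})
  (f_klin : forall (c : k) (a : A), f (c *: a) = map_mx ( *:%R c) (f a))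
  (P : algType k) (iota : {lrmorphism B -> P}) (V : 'M[P]_n.+1)
  (hP : is_free_product iota V) :
  let If := in_ideal (fun p : P => exists (a : A) (i j : 'I_n.+1),
              p = (V *m map_mx iota (f a) - map_mx iota (f a) *m V) i j) in
  ring_epi f <->
  [/\ forall i j : 'I_n.+1, If (V i i - V j j),
      forall i j : 'I_n.+1, i != j -> If (V i j) &
      forall (i : 'I_n.+1) (b : B), If (iota b * V i i - V i i * iota b)].
Proof.
move=> If; split; first exact: forward_dir.
exact: (backward_dir f_klin hP).
Qed.
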